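(* Let $k$ be a field, $Q$ a finite connected quiver without oriented cycles with vertex set $Q_0$ and arrow set $Q_1$, and $Z$ a minimal set of paths of length at least two. Then $$\dim_k H^1\big(kQ/\langle Z\rangle,\,kQ/\langle Z\rangle\big)\geq 1-|Q_0|+|Q_1|.$$
   Context: $kQ$ is the path algebra of $Q$, $\langle Z\rangle$ is the two-sided ideal generated by $Z$, and $H^1$ denotes first Hochschild cohomology. $Z$ minimal means no path in $Z$ has a strict sub-path belonging to $Z$. *)

(* Defs.v *)
From HB Require Import structures.
From mathcomp Require Import all_boot all_order all_algebra.
From mathcomp Require Import boolp.

Set Implicit Arguments.
Unset Strict Implicit.
Unset Printing Implicit Defensive.

Import Order.TTheory GRing.Theory.
Local Open Scope ring_scope.

Record quiver := Quiver {
  Q0 : finType;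
  Q1 : finType;
  qsrc : Q1 -> Q0;
  qtgt : Q1 -> Q0 }.

Definition arrow_comp (Q : quiver) : rel (Q1 Q) :=
  fun a b => qtgt a == qsrc b.

Definition acyclic (Q : quiver) : Prop :=
  forall (a : Q1 Q) (l : seq (Q1 Q)),
    path (@arrow_comp Q) a l -> qtgt (last a l) != qsrc a.

Definition qadj (Q : quiver) : rel (Q0 Q) :=
  fun u v => [exists a : Q1 Q, ((qsrc a == u) && (qtgt a == v))
                            || ((qsrc a == v) && (qtgt a == u))].

Definition connected_quiver (Q : quiver) : Prop :=
  (0 < #|Q0 Q|)%N /\ forall u v : Q0 Q, connect (@qadj Q) u v.

(* A (raw) path is a starting vertex together with a sequence of arrows
   (composed left to right); the empty sequence is the trivial path e_v. *)
Definition is_qpath (Q : quiver) (x : Q0 Q * seq (Q1 Q)) : bool :=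
  if x.2 is a :: l then (qsrc a == x.1) && path (@arrow_comp Q) a l else true.

(* Paths of length <= #|Q0|.  In a quiver without oriented cycles every
   path has length <= #|Q0| - 1, so this type contains ALL paths of Q
   (and is a finite type, which gives a finite basis of kQ). *)
Definition qpath (Q : quiver) :=
  {x : Q0 Q * (#|Q0 Q|).-bseq (Q1 Q) | is_qpath (x.1, val x.2)}.

Definition pstart (Q : quiver) (p : qpath Q) : Q0 Q := (val p).1.
Definition parrows (Q : quiver) (p : qpath Q) : seq (Q1 Q) := val (val p).2.
Definition plen (Q : quiver) (p : qpath Q) : nat := size (parrows p).
Definition pend (Q : quiver) (p : qpath Q) : Q0 Q :=
  if parrows p is a :: l then qtgt (last a l) else pstart p.

Definition pconcat (Q : quiver) (p q r : qpath Q) : bool :=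
  [&& pend p == pstart q, pstart r == pstart p
    & parrows r == parrows p ++ parrows q].

Definition subpath (Q : quiver) (z' z : qpath Q) : bool :=
  [exists p : qpath Q, exists q : qpath Q, exists w : qpath Q,
     pconcat p z' w && pconcat w q z].

Definition minimal_paths (Q : quiver) (Z : {set qpath Q}) : Prop :=
  forall z z', z \in Z -> z' \in Z -> subpath z' z -> z' = z.

Definition kQ (k : fieldType) (Q : quiver) := {ffun qpath Q -> k^o}.

Definition pvec (k : fieldType) (Q : quiver) (p : qpath Q) : kQ k Q :=
  [ffun r => if r == p then (1 : k) else 0].

Definition kQmul (k : fieldType) (Q : quiver) (x y : kQ k Q) : kQ k Q :=
  [ffun r => \sum_(p : qpath Q) \sum_(q : qpath Q | pconcat p q r)
               (x p : k) * (y q : k)].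

Definition pideal (k : fieldType) (Q : quiver) (Z : {set qpath Q})
  : {vspace kQ k Q} :=
  (\sum_(p : qpath Q) \sum_(z in Z) \sum_(q : qpath Q)
      <[kQmul (kQmul (pvec k p) (pvec k z)) (pvec k q)]>)%VS.

Definition ldim (k : fieldType) (vT : vectType k) (S : vT -> Prop) : nat :=
  \max_(n < (\dim (fullv : {vspace vT})).+1 |
        `[< exists U : {vspace vT}, \dim U = n /\ forall f, f \in U -> S f >])
     (n : nat).

(* H^1(A,A) = Der_k(A,A) / Inn(A) (1-cocycles modulo 1-coboundaries of  *)
(* the Hochschild complex).  A k-linear endomorphism of A = kQ/I is the *)
(* same as a linear f : kQ -> kQ with f(I) <= I, modulo those f with    *)
(* image in I.  Hence:                                                  *)
(*   derL  = lifts of derivations of A,                                 *)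
(*   innL  = lifts of inner derivations x |-> x a - a x of A,           *)
(*   nullL = lifts of the zero map of A,                                *)

Section HH1.
Variables (k : fieldType) (Q : quiver) (Z : {set qpath Q}).
Local Notation A := (kQ k Q).
Local Notation I := (pideal k Z).
Local Notation mul := (@kQmul k Q).

Definition derL (f : 'End(A)) : Prop :=
  (forall x, x \in I -> f x \in I) /\
  (forall x y, f (mul x y) - (mul x (f y) + mul (f x) y) \in I).

Definition nullL (f : 'End(A)) : Prop := forall x, f x \in I.

Definition innL (f : 'End(A)) : Prop :=
  exists a : A, forall x, f x - (mul x a - mul a x) \in I.

Definition dim_Der : nat := (ldim derL - ldim nullL)%N.
Definition dim_Inn : nat := (ldim innL - ldim nullL)%N.

Definition dim_HH1 : nat := (dim_Der - dim_Inn)%N.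
End HH1.

(* Main.v *)
From HB Require Import structures.
Require Import Defs.
From mathcomp Require Import all_boot all_order all_algebra.
From mathcomp Require Import boolp.
From mathcomp Require Import zify ring.
Set Implicit Arguments. Unset Strict Implicit. Unset Printing Implicit Defensive.
Import Order.TTheory GRing.Theory.
Local Open Scope ring_scope.

Section Paths.
Variable Q : quiver.

Fixpoint walk (v : Q0 Q) (l : seq (Q1 Q)) : bool :=
  if l is a :: l' then (qsrc a == v) && walk (qtgt a) l' else true.

Definition rend (v : Q0 Q) (l : seq (Q1 Q)) : Q0 Q :=
  if l is a :: l' then qtgt (last a l') else v.

Lemma path_walk a l : path (@arrow_comp Q) a l = walk (qtgt a) l.
Proof. by elim: l a => //= b l IH a; rewrite IH /arrow_comp eq_sym. Qed.

Lemma is_qpath_walk v l : is_qpath (v, l) = walk v l.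
Proof. case: l => //= a l. rewrite /is_qpath /=. by rewrite path_walk. Qed.

Lemma rend_cons v a l : rend v (a :: l) = rend (qtgt a) l.
Proof. by case: l. Qed.

Lemma rend_cat v l1 l2 : rend v (l1 ++ l2) = rend (rend v l1) l2.
Proof. by elim: l1 v => [//|a l1 IH v]; rewrite cat_cons !rend_cons IH. Qed.

Lemma walk_cat v l1 l2 : walk v (l1 ++ l2) = walk v l1 && walk (rend v l1) l2.
Proof.
elim: l1 v => [//|a l1 IH v]; rewrite cat_cons rend_cons.
by rewrite [walk v _]/= IH andbA.
Qed.

Lemma pendE (p : qpath Q) : pend p = rend (pstart p) (parrows p).
Proof. by []. Qed.

Lemma qpathP (p : qpath Q) :
  walk (pstart p) (parrows p) && (size (parrows p) <= #|Q0 Q|)%N.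
Proof.
case: p => [[v b] h]; rewrite /pstart /parrows /=.
by rewrite -is_qpath_walk h size_bseq.
Qed.

Lemma qpath_eq (p q : qpath Q) :
  pstart p = pstart q -> parrows p = parrows q -> p = q.
Proof.
case: p => [[v b] hp]; case: q => [[w c] hq]; rewrite /pstart /parrows /=.
move=> ev ea; apply: val_inj => /=; congr pair => //; exact: val_inj.
Qed.

Lemma mkqpath v l : walk v l -> (size l <= #|Q0 Q|)%N ->
  exists p : qpath Q, pstart p = v /\ parrows p = l.
Proof.
move=> hw hs.
have hq : is_qpath (v, val (Bseq hs)) by rewrite is_qpath_walk.
by exists (exist _ (v, Bseq hs) hq).
Qed.

Definition c4 (p q r t : qpath Q) :=
  [&& pend p == pstart q, pend q == pstart r, pstart t == pstart p
    & parrows t == parrows p ++ parrows q ++ parrows r].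

Lemma pconcat_uniq (p q s1 s2 : qpath Q) : pconcat p q s1 -> pconcat p q s2 -> s1 = s2.
Proof.
case/and3P => _ /eqP h1 /eqP h2 /and3P [_ /eqP h3 /eqP h4].
apply: qpath_eq; congruence.
Qed.

Lemma assocL (p q r t : qpath Q) : (exists s, pconcat p q s && pconcat s r t) <-> c4 p q r t.
Proof.
split.
  move=> [s /andP [/and3P[/eqP e1 /eqP e2 /eqP e3] /and3P[/eqP e4 /eqP e5 /eqP e6]]].
  have es : pend s = pend q by rewrite pendE e3 e2 rend_cat -pendE e1.
  apply/and4P; split; apply/eqP => //; first by rewrite -es.
    by rewrite e5.
  by rewrite e6 e3 catA.
case/and4P => /eqP e1 /eqP e2 /eqP e3 /eqP e4.
have /andP[wt st] := qpathP t.
have [s [s1 s2]] : exists s : qpath Q, pstart s = pstart p /\ parrows s = parrows p ++ parrows q.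
  apply: mkqpath.
    by move: wt; rewrite e4 catA walk_cat e3 => /andP[].
  by move: st; rewrite e4 catA size_cat; lia.
exists s; apply/andP; split; apply/and3P; split; apply/eqP => //.
- by rewrite pendE s2 s1 rend_cat -pendE e1.
- by rewrite s1.
- by rewrite s2 e4 catA.
Qed.

Lemma assocR (p q r t : qpath Q) : (exists s, pconcat q r s && pconcat p s t) <-> c4 p q r t.
Proof.
split.
  move=> [s /andP [/and3P[/eqP e1 /eqP e2 /eqP e3] /and3P[/eqP e4 /eqP e5 /eqP e6]]].
  apply/and4P; split; apply/eqP => //; first by rewrite e4.
  by rewrite e6 e3.
case/and4P => /eqP e1 /eqP e2 /eqP e3 /eqP e4.
have /andP[wt st] := qpathP t.
have [s [s1 s2]] : exists s : qpath Q, pstart s = pstart q /\ parrows s = parrows q ++ parrows r.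
  apply: mkqpath.
    by move: wt; rewrite e4 walk_cat e3 -pendE e1 => /andP[].
  by move: st; rewrite e4 !size_cat; lia.
exists s; apply/andP; split; apply/and3P; split; apply/eqP => //.
- by rewrite s1.
- by rewrite s2 e4.
Qed.

End Paths.

Section Alg.
Variables (k : fieldType) (Q : quiver).
Local Notation A := (kQ k Q).
Local Notation mul := (@kQmul k Q).
Local Notation pv := (@pvec k Q).

Lemma kQmulE (x y : A) r :
  mul x y r = \sum_p \sum_q (pconcat p q r)%:R * ((x p : k) * (y q : k)).
Proof.
rewrite ffunE; apply: eq_bigr => p _; rewrite big_mkcond; apply: eq_bigr => q _.
by case: ifP => _; rewrite ?mul1r ?mul0r.
Qed.

Lemma sum_ind (T : finType) (P : pred T) (b : bool) :
  ((exists s, P s) <-> b) -> (forall s1 s2, P s1 -> P s2 -> s1 = s2) ->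
  \sum_(s : T) ((P s)%:R : k) = b%:R.
Proof.
move=> [h1 h2] hu; case: b h1 h2 => h1 h2.
  have [s0 Ps0] := h2 isT.
  rewrite (bigD1 s0) //= Ps0 big1 ?addr0 // => s ns.
  case Ps: (P s) => //; by rewrite (hu _ _ Ps Ps0) eqxx in ns.
apply: big1 => s _; case Ps: (P s) => //.
by have := h1 (ex_intro _ s Ps).
Qed.

Lemma kQmulA (x y z : A) : mul (mul x y) z = mul x (mul y z).
Proof.
apply/ffunP => t.
transitivity (\sum_p \sum_q \sum_r (c4 p q r t)%:R * ((x p : k) * (y q : k) * (z r : k))).
  rewrite kQmulE.
  transitivity (\sum_s \sum_r \sum_p \sum_q (pconcat s r t)%:R * (pconcat p q s)%:R
                 * ((x p : k) * (y q : k) * (z r : k))).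
    apply: eq_bigr => s _; apply: eq_bigr => r _; rewrite kQmulE big_distrl big_distrr.
    apply: eq_bigr => p _ /=; rewrite big_distrl big_distrr; apply: eq_bigr => q _ /=.
    ring.
  rewrite exchange_big; under eq_bigr => r _ do rewrite exchange_big.
  rewrite exchange_big; under eq_bigr => p _ do under eq_bigr => r _ do rewrite exchange_big.
  under eq_bigr => p _ do rewrite exchange_big.
  apply: eq_bigr => p _; apply: eq_bigr => q _; apply: eq_bigr => r _.
  rewrite -big_distrl /=; congr (_ * _).
  rewrite -(@sum_ind _ (fun s => pconcat p q s && pconcat s r t) _ (assocL p q r t)).
    apply: eq_bigr => s _; case: (pconcat p q s); case: (pconcat s r t); rewrite ?mulr1 ?mulr0 ?mul1r ?mul0r //.
  by move=> s1 s2 /andP[h1 _] /andP[h2 _]; apply: pconcat_uniq h1 h2.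
symmetry; rewrite kQmulE.
transitivity (\sum_p \sum_s \sum_q \sum_r (pconcat p s t)%:R * (pconcat q r s)%:R
               * ((x p : k) * (y q : k) * (z r : k))).
  apply: eq_bigr => p _; apply: eq_bigr => s _; rewrite kQmulE big_distrr big_distrr.
  apply: eq_bigr => q _ /=; rewrite big_distrr big_distrr; apply: eq_bigr => r _ /=.
  ring.
apply: eq_bigr => p _.
rewrite exchange_big; under eq_bigr => q _ do rewrite exchange_big.
apply: eq_bigr => q _; apply: eq_bigr => r _.
rewrite -big_distrl /=; congr (_ * _).
rewrite -(@sum_ind _ (fun s => pconcat q r s && pconcat p s t) _ (assocR p q r t)).
  apply: eq_bigr => s _; case: (pconcat q r s); case: (pconcat p s t); rewrite ?mulr1 ?mulr0 ?mul1r ?mul0r //.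
by move=> s1 s2 /andP[h1 _] /andP[h2 _]; apply: pconcat_uniq h1 h2.
Qed.

End Alg.

Section Alg2.
Variables (k : fieldType) (Q : quiver).
Local Notation A := (kQ k Q).
Local Notation mul := (@kQmul k Q).
Local Notation pv := (@pvec k Q).

Lemma addAE (x y : A) r : (x + y) r = (x r : k) + y r.
Proof. by rewrite ffunE. Qed.
Lemma scAE a (x : A) r : (a *: x) r = a * (x r : k).
Proof. by rewrite ffunE. Qed.
Lemma zeroAE r : (0 : A) r = 0.
Proof. by rewrite ffunE. Qed.
Lemma oppAE (x : A) r : (- x) r = - (x r : k).
Proof. by rewrite ffunE. Qed.

Lemma qmulDZl a (x y z : A) : mul (a *: x + y) z = a *: mul x z + mul y z.
Proof.
apply/ffunP => r; rewrite addAE scAE !kQmulE.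
rewrite big_distrr -big_split; apply: eq_bigr => p _ /=.
rewrite big_distrr -big_split; apply: eq_bigr => q _ /=.
rewrite addAE scAE. ring.
Qed.

Lemma qmulDZr a (x y z : A) : mul z (a *: x + y) = a *: mul z x + mul z y.
Proof.
apply/ffunP => r; rewrite addAE scAE !kQmulE.
rewrite big_distrr -big_split; apply: eq_bigr => p _ /=.
rewrite big_distrr -big_split; apply: eq_bigr => q _ /=.
rewrite addAE scAE. ring.
Qed.

Lemma qmul0l (x : A) : mul 0 x = 0.
Proof.
apply/ffunP => r; rewrite kQmulE zeroAE big1 // => p _; rewrite big1 // => q _.
by rewrite zeroAE mul0r mulr0.
Qed.

Lemma qmul0r (x : A) : mul x 0 = 0.
Proof.
apply/ffunP => r; rewrite kQmulE zeroAE big1 // => p _; rewrite big1 // => q _.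
by rewrite zeroAE mulr0 mulr0.
Qed.

Lemma qmulDl (x y z : A) : mul (x + y) z = mul x z + mul y z.
Proof. by rewrite -[x]scale1r qmulDZl !scale1r. Qed.
Lemma qmulDr (x y z : A) : mul z (x + y) = mul z x + mul z y.
Proof. by rewrite -[x]scale1r qmulDZr !scale1r. Qed.
Lemma qmulZl a (x z : A) : mul (a *: x) z = a *: mul x z.
Proof. by rewrite -[a *: x]addr0 qmulDZl qmul0l addr0. Qed.
Lemma qmulZr a (x z : A) : mul z (a *: x) = a *: mul z x.
Proof. by rewrite -[a *: x]addr0 qmulDZr qmul0r addr0. Qed.
Lemma qmulNl (x z : A) : mul (- x) z = - mul x z.
Proof. by rewrite -scaleN1r qmulZl scaleN1r. Qed.
Lemma qmulNr (x z : A) : mul z (- x) = - mul z x.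
Proof. by rewrite -scaleN1r qmulZr scaleN1r. Qed.
Lemma qmulBl (x y z : A) : mul (x - y) z = mul x z - mul y z.
Proof. by rewrite qmulDl qmulNl. Qed.
Lemma qmulBr (x y z : A) : mul z (x - y) = mul z x - mul z y.
Proof. by rewrite qmulDr qmulNr. Qed.
Lemma qmul_suml (I : finType) (P : pred I) (F : I -> A) z :
  mul (\sum_(i | P i) F i) z = \sum_(i | P i) mul (F i) z.
Proof.
apply: (big_ind2 (fun a b => mul a z = b)); first exact: qmul0l.
  by move=> a1 b1 a2 b2 <- <-; rewrite qmulDl.
by [].
Qed.
Lemma qmul_sumr (I : finType) (P : pred I) (F : I -> A) z :
  mul z (\sum_(i | P i) F i) = \sum_(i | P i) mul z (F i).
Proof.
apply: (big_ind2 (fun a b => mul z a = b)); first exact: qmul0r.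
  by move=> a1 b1 a2 b2 <- <-; rewrite qmulDr.
by [].
Qed.

Lemma pvE p r : pv p r = (r == p)%:R.
Proof. by rewrite ffunE; case: eqP. Qed.

Lemma pv_decomp (x : A) : x = \sum_p (x p : k) *: pv p.
Proof.
apply/ffunP => r; rewrite sum_ffunE (bigD1 r) //= big1 ?addr0.
  by rewrite scAE pvE eqxx mulr1.
by move=> p /negbTE hp; rewrite scAE pvE eq_sym hp mulr0.
Qed.

Lemma mul_pvec p q : mul (pv p) (pv q) = \sum_(r | pconcat p q r) pv r.
Proof.
apply/ffunP => r; rewrite kQmulE sum_ffunE.
rewrite (bigD1 p) //= [X in _ + X]big1 ?addr0; last first.
  by move=> p' hp; apply: big1 => q' _; rewrite pvE (negbTE hp) mul0r mulr0.
rewrite (bigD1 q) //= [X in _ + X]big1 ?addr0; last first.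
  by move=> q' hq; rewrite !pvE (negbTE hq) mulr0 mulr0.
rewrite !pvE !eqxx mulr1 mulr1.
rewrite big_mkcond (bigD1 r) //= [X in _ + X]big1 ?addr0; last first.
  by move=> r' hr; rewrite pvE eq_sym (negbTE hr); case: ifP.
by rewrite pvE eqxx; case: ifP.
Qed.

Lemma mul_pv_l (x : A) u r : mul (pv u) x r = \sum_(q | pconcat u q r) (x q : k).
Proof.
rewrite kQmulE (bigD1 u) //= [X in _ + X]big1 ?addr0; last first.
  by move=> p hp; apply: big1 => q _; rewrite pvE (negbTE hp) mul0r mulr0.
rewrite [RHS]big_mkcond; apply: eq_bigr => q _; rewrite pvE eqxx mul1r.
by case: ifP; rewrite ?mul1r ?mul0r.
Qed.

Lemma mul_pv_r (x : A) u r : mul x (pv u) r = \sum_(p | pconcat p u r) (x p : k).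
Proof.
rewrite kQmulE [RHS]big_mkcond; apply: eq_bigr => p _.
rewrite (bigD1 u) //= [X in _ + X]big1 ?addr0; last first.
  by move=> q hq; rewrite pvE (negbTE hq) mulr0 mulr0.
rewrite pvE eqxx mulr1.
by case: ifP; rewrite ?mul1r ?mul0r.
Qed.

End Alg2.

Section Ideal.
Variables (k : fieldType) (Q : quiver) (Z : {set qpath Q}).
Local Notation A := (kQ k Q).
Local Notation mul := (@kQmul k Q).
Local Notation pv := (@pvec k Q).
Local Notation I := (pideal k Z).

Definition gen p z q : A := mul (mul (pv p) (pv z)) (pv q).

Lemma gen_in p z q : z \in Z -> gen p z q \in I.
Proof.
move=> hz; rewrite memvE.
apply: (sumv_sup p) => //; apply: (sumv_sup z) => //; apply: (sumv_sup q) => //.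
Qed.

Lemma I_elim (P : A -> Prop) : P 0 ->
  (forall a x y, P x -> P y -> P (a *: x + y)) ->
  (forall p z q, z \in Z -> P (gen p z q)) -> forall x, x \in I -> P x.
Proof.
move=> P0 Plin Pgen.
have Padd x y : P x -> P y -> P (x + y) by move=> hx hy; rewrite -[x]scale1r; apply: Plin.
have Psc a x : P x -> P (a *: x) by move=> hx; rewrite -[a *: x]addr0; apply: Plin.
move=> x /memv_sumP [vs hvs ->]; apply: big_ind => // p _.
have /memv_sumP [ws hws ->] := hvs p isT; apply: big_ind => // z hz.
have /memv_sumP [us hus ->] := hws z hz; apply: big_ind => // q _.
have /vlineP [c ->] := hus q isT; apply: Psc; exact: Pgen.
Qed.

Lemma I_lin (f : A -> A) : (forall a x y, f (a *: x + y) = a *: f x + f y) ->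
  (forall p z q, z \in Z -> f (gen p z q) \in I) -> forall x, x \in I -> f x \in I.
Proof.
move=> hf hg; apply: I_elim => //.
  have h := hf 1 0 0; rewrite !scale1r addr0 in h.
  by move: h; rewrite -{1}[f 0]addr0 => /addrI <-; rewrite mem0v.
by move=> a x y hx hy; rewrite hf; apply: memvD => //; apply: memvZ.
Qed.

Lemma I_mull y x : x \in I -> mul y x \in I.
Proof.
apply: (@I_lin (fun w => mul y w)) => [a u v|p z q hz]; first exact: qmulDZr.
rewrite (pv_decomp y) qmul_suml; apply: memv_suml => u _; rewrite qmulZl; apply: memvZ.
rewrite /gen -!kQmulA mul_pvec !qmul_suml; apply: memv_suml => r _.
exact: gen_in.
Qed.

Lemma I_mulr y x : x \in I -> mul x y \in I.
Proof.
apply: (@I_lin (fun w => mul w y)) => [a u v|p z q hz]; first exact: qmulDZl.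
rewrite (pv_decomp y) qmul_sumr; apply: memv_suml => u _; rewrite qmulZr; apply: memvZ.
rewrite /gen kQmulA (@mul_pvec k Q q u) qmul_sumr; apply: memv_suml => r _.
exact: gen_in.
Qed.

Lemma I_coef x pb : (forall z, z \in Z -> 2 <= plen z)%N -> (plen pb < 2)%N ->
  x \in I -> x pb = 0 :> k.
Proof.
move=> hZ hb; apply: (@I_elim (fun w : A => w pb = 0)) => [|a u v hu hv|p z q hz]; first by rewrite zeroAE.
  by rewrite addAE scAE hu hv mulr0 addr0.
rewrite /gen mul_pvec qmul_suml sum_ffunE big1 // => s hs.
rewrite mul_pvec sum_ffunE big1 // => r hr; rewrite pvE.
case: eqP => // er; subst r; exfalso.
move: hs hr => /and3P[_ _ /eqP h1] /and3P[_ _ /eqP h2].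
have := hZ z hz; move: hb; rewrite /plen h2 h1 !size_cat; lia.
Qed.

End Ideal.

Lemma zid (V : zmodType) (F X W P R S : V) :
  F - (X + W) = F - (P - R) - (X - (P - S) + (W - (S - R))).
Proof.
rewrite !opprD !opprK !addrA.
rewrite (addrAC _ (- W) S) subrK.
rewrite (addrAC _ (- X) P) (addrAC (F - P) R P) subrK.
by rewrite (addrAC _ (- W) (- R)) (addrAC _ (- X) (- R)) addrK.
Qed.

Lemma zid2 (V : zmodType) (a b c d e f : V) :
  (a + b) - ((c + d) + (e + f)) = (a - (c + e)) + (b - (d + f)).
Proof. by rewrite [X in _ - X]addrACA opprD addrACA. Qed.

Definition Dfun (k : fieldType) (Q : quiver) (a : Q1 Q) (x : kQ k Q) : kQ k Q :=
  [ffun r : qpath Q => ((count_mem a (parrows r))%:R * (x r : k) : k^o)].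

Lemma Dfun_lin (k : fieldType) (Q : quiver) (a : Q1 Q) : linear (@Dfun k Q a).
Proof.
move=> c u v; apply/ffunP => r.
rewrite /Dfun !ffunE /=; rewrite /GRing.scale /=; ring.
Qed.

HB.instance Definition _ (k : fieldType) (Q : quiver) (a : Q1 Q) :=
  GRing.isLinear.Build k (kQ k Q) (kQ k Q) *:%R (@Dfun k Q a) (@Dfun_lin k Q a).

Definition Dl (k : fieldType) (Q : quiver) (a : Q1 Q) : 'End(kQ k Q) :=
  linfun (@Dfun k Q a).

Section Der.
Variables (k : fieldType) (Q : quiver) (Z : {set qpath Q}).
Local Notation A := (kQ k Q).
Local Notation mul := (@kQmul k Q).
Local Notation pv := (@pvec k Q).
Local Notation I := (pideal k Z).

Lemma DlE (a : Q1 Q) (x : A) : Dl k a x = Dfun a x.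
Proof. by rewrite lfunE. Qed.

Lemma DfunE (a : Q1 Q) (x : A) r : Dfun a x r = (count_mem a (parrows r))%:R * (x r : k).
Proof. by rewrite ffunE. Qed.

Lemma Dleib (a : Q1 Q) (x y : A) : Dfun a (mul x y) = mul x (Dfun a y) + mul (Dfun a x) y.
Proof.
apply/ffunP => r; rewrite addAE DfunE !kQmulE big_distrr -big_split.
apply: eq_bigr => p _ /=; rewrite big_distrr -big_split; apply: eq_bigr => q _ /=.
rewrite !DfunE; case h: (pconcat p q r); last by rewrite !mul0r mulr0 addr0.
move: h => /and3P[_ _ /eqP ->]; rewrite count_cat natrD; ring.
Qed.

Lemma Dpv (a : Q1 Q) u : Dfun a (pv u) = (count_mem a (parrows u))%:R *: pv u.
Proof.
apply/ffunP => r; rewrite scAE DfunE !pvE.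
by case: eqP => [->|_]; rewrite ?mulr0.
Qed.

Lemma Dl_der (a : Q1 Q) : derL Z (Dl k a).
Proof.
split; last by move=> x y; rewrite !DlE Dleib subrr mem0v.
move=> x hx; rewrite DlE.
apply: (@I_lin k Q Z (Dfun a)) => // [c u v|p z q hz]; first exact: Dfun_lin.
rewrite /gen !Dleib !Dpv !qmulZl !qmulZr qmulDl qmulZl.
have hg := gen_in k p q hz; rewrite /gen in hg.
rewrite qmulZl.
by apply: memvD; [|apply: memvD]; apply: memvZ.
Qed.

Lemma derL0 : derL Z (0 : 'End(A)).
Proof.
split=> [x _|x y]; rewrite !zero_lfunE ?mem0v //.
by rewrite qmul0r qmul0l addr0 subr0 mem0v.
Qed.

Lemma derLD (f g : 'End(A)) : derL Z f -> derL Z g -> derL Z (f + g).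
Proof.
move=> [f1 f2] [g1 g2]; split=> [x hx|x y]; rewrite !add_lfunE.
  by apply: memvD; [apply: f1|apply: g1].
by rewrite qmulDr qmulDl zid2; apply: memvD.
Qed.

Lemma derLZ c (f : 'End(A)) : derL Z f -> derL Z (c *: f).
Proof.
move=> [f1 f2]; split=> [x hx|x y]; rewrite !scale_lfunE.
  by apply: memvZ; apply: f1.
by rewrite qmulZr qmulZl -scalerDr -scalerBr; apply: memvZ.
Qed.

Lemma inn_der (f : 'End(A)) : innL Z f -> derL Z f.
Proof.
move=> [a ha]; split=> [x hx|x y].
  rewrite -(subrK (mul x a - mul a x) (f x)); apply: memvD; first exact: ha.
  by apply: memvB; [apply: I_mulr|apply: I_mull].
rewrite (zid (f (mul x y)) (mul x (f y)) (mul (f x) y) (mul (mul x y) a)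
             (mul a (mul x y)) (mul (mul x a) y)).
apply: memvB; first exact: ha.
have e1 : mul x (f y) - (mul (mul x y) a - mul (mul x a) y)
          = mul x (f y - (mul y a - mul a y)).
  by rewrite qmulBr qmulBr !kQmulA.
have e2 : mul (f x) y - (mul (mul x a) y - mul a (mul x y))
          = mul (f x - (mul x a - mul a x)) y.
  by rewrite qmulBl qmulBl !kQmulA.
by rewrite e1 e2; apply: memvD; [apply: I_mull; apply: ha|apply: I_mulr; apply: ha].
Qed.

Lemma null_inn (f : 'End(A)) : nullL Z f -> innL Z f.
Proof. move=> hf; exists 0 => x. rewrite qmul0r qmul0l subr0 subr0; exact: hf. Qed.

End Der.

Definition triv (Q : quiver) (v : Q0 Q) : qpath Q :=
  exist (fun x : Q0 Q * (#|Q0 Q|).-bseq (Q1 Q) => is_qpath (x.1, val x.2))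
        (v, @Bseq #|Q0 Q| (Q1 Q) [::] (leq0n _)) isT.

Section Ldim.
Variables (k : fieldType) (vT : vectType k).

Lemma ldim_ge (S : vT -> Prop) (U : {vspace vT}) :
  (forall f, f \in U -> S f) -> (\dim U <= ldim S)%N.
Proof.
move=> hS.
have hlt : (\dim U < (\dim (fullv : {vspace vT})).+1)%N by rewrite ltnS dimvS // subvf.
rewrite /ldim; apply: (@bigop.leq_bigmax_cond _ _ (fun n : 'I_ _ => (n : nat)) (Ordinal hlt)).
by apply/asboolP; exists U.
Qed.

Lemma ldim_attained (S : vT -> Prop) : S 0 ->
  exists U : {vspace vT}, \dim U = ldim S /\ forall f, f \in U -> S f.
Proof.
move=> S0; rewrite /ldim.
have P0 : `[< exists U : {vspace vT}, \dim U = (@ord0 (\dim (fullv : {vspace vT})) : nat)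
                                   /\ forall f, f \in U -> S f >].
  apply/asboolP; exists 0%VS; split; first by rewrite dimv0.
  by move=> f; rewrite memv0 => /eqP ->.
rewrite (bigop.bigmax_eq_arg ord0 P0); case: arg_maxnP => // i /asboolP [U [hU hS]] _.
by exists U.
Qed.

Lemma ldim_mono (S1 S2 : vT -> Prop) : (forall f, S1 f -> S2 f) ->
  (ldim S1 <= ldim S2)%N.
Proof.
move=> h; apply/bigop.bigmax_leqP => i /asboolP [U [hU hS]]; rewrite -hU.
by apply: ldim_ge => f /hS; apply: h.
Qed.
End Ldim.

Section Main.
Variables (k : fieldType) (Q : quiver) (Z : {set qpath Q}).
Local Notation A := (kQ k Q).
Local Notation mul := (@kQmul k Q).
Local Notation pv := (@pvec k Q).
Local Notation I := (pideal k Z).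

Lemma triv_eq (q : qpath Q) v : (q == triv v) = (pstart q == v) && (parrows q == [::]).
Proof.
apply/eqP/andP => [->|[/eqP h1 /eqP h2]]; first by [].
exact: qpath_eq.
Qed.

Lemma coef_left (x : A) pb b : pstart pb = qsrc b -> parrows pb = [:: b] ->
  mul (pv pb) x pb = x (triv (qtgt b)).
Proof.
move=> h1 h2; rewrite mul_pv_l (big_pred1 (triv (qtgt b))) // => q /=.
rewrite triv_eq /pconcat pendE h1 h2 eqxx /= eqseq_cons eqxx /=.
by rewrite (eq_sym _ (pstart q)) (eq_sym [::]).
Qed.

Lemma coef_right (x : A) pb b : pstart pb = qsrc b -> parrows pb = [:: b] ->
  mul x (pv pb) pb = x (triv (qsrc b)).
Proof.
move=> h1 h2; rewrite mul_pv_r (big_pred1 (triv (qsrc b))) // => p /=.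
rewrite triv_eq /pconcat pendE h1 h2 /=.
case e: (parrows p) => [|c l] /=.
  by rewrite eqxx !andbT (eq_sym (qsrc b)) andbb.
rewrite andbF; apply/negbTE; apply/and3P => -[_ _ /eqP].
move/(congr1 size) => /=; rewrite size_cat /=; lia.
Qed.


Lemma arrow_path b : (0 < #|Q0 Q|)%N ->
  exists pb : qpath Q, pstart pb = qsrc b /\ parrows pb = [:: b].
Proof. by move=> h; apply: mkqpath => //=; rewrite eqxx. Qed.

Definition Xt : #|Q1 Q|.-tuple 'End(A) := [tuple Dl k (enum_val i) | i < #|Q1 Q|].

Lemma XtE (i : 'I_#|Q1 Q|) : Xt`_i = Dl k (enum_val i).
Proof. by rewrite -tnth_nth tnth_mktuple. Qed.

Lemma sumX_coef (c : 'I_#|Q1 Q| -> k) j pb :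
  pstart pb = qsrc (enum_val j) -> parrows pb = [:: enum_val j] ->
  (\sum_i c i *: Xt`_i) (pv pb) pb = c j.
Proof.
move=> h1 h2; rewrite sum_lfunE sum_ffunE (bigD1 j) //= [X in _ + X]big1 ?addr0.
  by rewrite scale_lfunE scAE XtE DlE Dpv scAE pvE h2 /= !eqxx /= mulr1 mulr1.
move=> i hij; rewrite scale_lfunE scAE XtE DlE Dpv scAE pvE h2 /= eqxx.
suff -> : (enum_val j == enum_val i) = false by rewrite mul0r mulr0.
by apply/negbTE; apply: contra hij => /eqP /enum_val_inj ->.
Qed.

Lemma freeX : (0 < #|Q0 Q|)%N -> free Xt.
Proof.
move=> hQ; apply/freeP => c hc j.
have [pb [h1 h2]] := arrow_path (enum_val j) hQ.
by rewrite -(sumX_coef c h1 h2) hc zero_lfunE zeroAE.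
Qed.

Lemma dimX : (0 < #|Q0 Q|)%N -> \dim <<Xt>> = #|Q1 Q|.
Proof. by move=> hQ; move/eqP: (freeX hQ); rewrite size_tuple. Qed.

Definition Ev (v : Q0 Q) : 'End(A) :=
  \sum_a ((qtgt a == v)%:R - (qsrc a == v)%:R) *: Dl k a.

Lemma sum_delta (mu : Q0 Q -> k) t : \sum_v mu v * (t == v)%:R = mu t.
Proof.
rewrite (bigD1 t) //= eqxx mulr1 big1 ?addr0 // => v hv.
by rewrite eq_sym (negbTE hv) mulr0.
Qed.

Lemma capX (v0 : Q0 Q) (U : {vspace 'End(A)}) :
  (forall z, z \in Z -> 2 <= plen z)%N -> (0 < #|Q0 Q|)%N ->
  (forall f, f \in U -> innL Z f) ->
  (U :&: <<Xt>> <= <<[seq Ev v | v <- enum (predC1 v0)]>>)%VS.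
Proof.
move=> hZ hQ hU; apply/subvP => f /memv_capP [fU fD].
have [x0 hx0] := hU f fU.
pose lam v := (x0 (triv v) : k) - x0 (triv v0).
have hc : forall i, coord Xt i f = lam (qtgt (enum_val i)) - lam (qsrc (enum_val i)).
  move=> i; have [pb [h1 h2]] := arrow_path (enum_val i) hQ.
  have hpb : (plen pb < 2)%N by rewrite /plen h2.
  have := I_coef (x:= f (pv pb) - (mul (pv pb) x0 - mul x0 (pv pb))) hZ hpb (hx0 _).
  rewrite addAE oppAE addAE oppAE (coef_left _ h1 h2) (coef_right _ h1 h2).
  rewrite {1}(coord_span fD) (sumX_coef _ h1 h2) /lam => /eqP; rewrite subr_eq0 => /eqP ->.
  ring.
rewrite (coord_span fD).
have -> : \sum_i coord Xt i f *: Xt`_i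
          = \sum_(v | v != v0) lam v *: Ev v.
  transitivity (\sum_v lam v *: Ev v); last first.
    by rewrite (bigD1 v0) //= /lam subrr scale0r add0r.
  rewrite /Ev; under [RHS]eq_bigr => v _ do rewrite scaler_sumr.
  rewrite [RHS]exchange_big /=.
  under [RHS]eq_bigr => a _ do under eq_bigr => v _ do rewrite scalerA.
  under [RHS]eq_bigr => a _ do rewrite -scaler_suml.
  under [RHS]eq_bigr => a _ do under eq_bigr => v _ do rewrite mulrBr.
  under [RHS]eq_bigr => a _ do rewrite sumrB !sum_delta.
  rewrite [LHS](eq_bigr (fun i => (lam (qtgt (enum_val i)) - lam (qsrc (enum_val i)))
                                    *: Dl k (enum_val i))); last first.
    by move=> i _; rewrite hc XtE.
  symmetry.
  exact: (big_enum_val (fun a => (lam (qtgt a) - lam (qsrc a)) *: Dl k a)).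
apply: memv_suml => v hv; apply: memvZ; apply: memv_span.
by apply: map_f; rewrite mem_enum.
Qed.

End Main.

Theorem main_thm (k : fieldType) (Q : quiver) (Z : {set qpath Q}) :
  connected_quiver Q ->
  (forall z, z \in Z -> 2 <= plen z)%N ->
  (1 + #|Q1 Q| <= dim_HH1 k Z + #|Q0 Q|)%N.
Proof.
move=> [hQ _] hZ.
have [v0 _] : exists v0 : Q0 Q, true by move/card_gt0P: hQ => [v _]; exists v.
have inn0 : innL Z (0 : 'End(kQ k Q)).
  by apply: null_inn => x; rewrite zero_lfunE mem0v.
have [U [hdU hU]] := ldim_attained inn0.
have hcap := @capX k Q Z v0 U hZ hQ hU.
have hsum : (\dim (U + <<Xt k Q>>) + \dim (U :&: <<Xt k Q>>) = \dim U + \dim <<Xt k Q>>)%N := dimv_sum_cap U <<Xt k Q>>.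
have h1 : (\dim (U :&: <<Xt k Q>>) <= \dim <<[seq Ev k v | v <- enum (predC1 v0)]>>)%N := dimvS hcap.
have h2 := dim_span [seq Ev k v | v <- enum (predC1 v0)].
rewrite size_map -cardE cardC1 in h2.
have hX := dimX k hQ.
have hder : (\dim (U + <<Xt k Q>>) <= ldim (@derL k Q Z))%N.
  apply: ldim_ge => f /memv_addP [u hu [d hd ->]].
  apply: derLD; first exact: inn_der (hU u hu).
  rewrite (coord_span hd); apply: big_ind => //; first exact: derL0.
    by move=> f1 f2; apply: derLD.
  by move=> i _; apply: derLZ; rewrite XtE; apply: Dl_der.
have hni : (ldim (@nullL k Q Z) <= ldim (@innL k Q Z))%N by apply: ldim_mono => f; apply: null_inn.
rewrite /dim_HH1 /dim_Der /dim_Inn.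
rewrite -hdU in hni *. rewrite hX in hsum. have hp : #|Q0 Q|.-1.+1 = #|Q0 Q| by rewrite prednK. move: hder hni hsum h1 h2 hp. generalize (ldim (@derL k Q Z)) (ldim (@nullL k Q Z)). intros. move: hder hni hsum h1 h2 hp. generalize (\dim (U :&: <<Xt k Q>>)) (\dim (U + <<Xt k Q>>)) (\dim U) (\dim <<[seq Ev k v | v <- enum (predC1 v0)]>>). intros. lia.
Qed.


Local Close Scope ring_scope.

Theorem corollary5p2 (k : fieldType) (Q : quiver) (Z : {set qpath Q}) :
  connected_quiver Q ->
  acyclic Q ->
  (forall z, z \in Z -> 2 <= plen z)%N ->
  minimal_paths Z ->
  (1 + #|Q1 Q| <= dim_HH1 k Z + #|Q0 Q|)%N.
Proof.
move=> hc _ hZ _; exact: main_thm hc hZ.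
Qed.
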